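(* Let $\mathbb F$ be a field, $q\in\mathbb F$, $f,g\in\mathbb F[h]$. The associated graded algebra $\mathrm{Gr}(\mathcal H_q(f,g))=\bigoplus_{\alpha,\beta\ge 0}\mathcal F_{(\alpha,\beta)}/\mathcal F^-_{(\alpha,\beta)}$ is generated by the images $\bar x,\bar y,\bar h$ of $x,y,h$ subject to the relations $\bar h\bar x=\bar x f(\bar h)$, $\bar y\bar h=f(\bar h)\bar y$, $\bar y\bar x=q\bar x\bar y$; that is, $\mathrm{Gr}(\mathcal H_q(f,g))\cong\mathcal H_q(f,0)$.
   Context: For a field $\mathbb F$, $q\in\mathbb F$ and $f,g\in\mathbb F[h]$, $\mathcal H_q(f,g)$ is the unital associative $\mathbb F$-algebra generated by $x,y,h$ with relations $hx=xf(h)$, $yh=f(h)y$, $yx-qxy=g(h)$. Every element $a$ can be written uniquely as $a=\sum_{i,j\ge 0}x^ip_{ij}(h)y^j$ with $p_{ij}\in\mathbb F[h]$. For $a\ne0$, $\mathrm{Deg}(a)$ is the lexicographic maximum of $\{(i,j):p_{ij}\ne 0\}$, $\mathrm{Deg}(0)=(-\infty,-\infty)$; $\mathcal F_{(\alpha,\beta)}=\{a:\mathrm{Deg}(a)\le(\alpha,\beta)\}$ and $\mathcal F^-_{(\alpha,\beta)}=\{a:\mathrm{Deg}(a)<(\alpha,\beta)\}$ in lexicographic order; these form an increasing $\mathbb Z_{\ge0}^2$-filtration of $\mathcal H_q(f,g)$. *)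

(* Defs.v *)
From HB Require Import structures.
From mathcomp Require Import all_boot all_order all_algebra.
Set Implicit Arguments. Unset Strict Implicit. Unset Printing Implicit Defensive.
Import Order.TTheory GRing.Theory.
Local Open Scope ring_scope.

Definition peval (F : fieldType) (A : algType F) (p : {poly F}) (h : A) : A :=
  \sum_(i < size p) p`_i *: h ^+ i.

Definition Hq_rels (F : fieldType) (A : algType F) (q : F) (f g : {poly F})
  (x y h : A) : Prop :=
  [/\ h * x = x * peval f h,
      y * h = peval f h * y
    & y * x - q *: (x * y) = peval g h].

Definition nf (F : fieldType) (A : algType F) (x y h : A) (N : nat)
  (P : nat -> nat -> {poly F}) : A :=
  \sum_(i < N) \sum_(j < N) x ^+ i * peval (P i j) h * y ^+ j.

Definition PBW (F : fieldType) (A : algType F) (x y h : A) : Prop :=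
  (forall a : A, exists N P, a = nf x y h N P) /\
  (forall N P, nf x y h N P = 0 ->
     forall i j, (i < N)%N -> (j < N)%N -> P i j = 0).

(* (A, x, y, h) is (a copy of) H_q(f,g): the generators satisfy the
   defining relations and the PBW normal form holds. *)
Definition is_Hq (F : fieldType) (A : algType F) (q : F) (f g : {poly F})
  (x y h : A) : Prop :=
  Hq_rels q f g x y h /\ PBW x y h.

Definition lexlt (a b c d : nat) : bool :=
  (a < c)%N || ((a == c) && (b < d)%N).

Definition filt (F : fieldType) (A : algType F) (x y h : A) (al be : nat)
  (a : A) : Prop :=
  exists N P, a = nf x y h N P /\ forall i j, lexlt al be i j -> P i j = 0.

Definition filtm (F : fieldType) (A : algType F) (x y h : A) (al be : nat)
  (a : A) : Prop :=
  exists N P, a = nf x y h N P /\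
    forall i j, ~~ lexlt i j al be -> P i j = 0.

(* Representatives of elements of Gr = (+)_{al,be} F_(al,be)/F^-_(al,be):
   finitely supported families G with G al be \in F_(al,be). *)
Definition grfam (F : fieldType) (A : algType F) (x y h : A)
  (G : nat -> nat -> A) : Prop :=
  (exists N, forall i j, (N <= i)%N \/ (N <= j)%N -> G i j = 0) /\
  (forall i j, filt x y h i j (G i j)).

Definition grequiv (F : fieldType) (A : algType F) (x y h : A)
  (G G' : nat -> nat -> A) : Prop :=
  forall i j, filtm x y h i j (G i j - G' i j).

Definition gradd (F : fieldType) (A : algType F) (G G' : nat -> nat -> A) :
  nat -> nat -> A := fun i j => G i j + G' i j.

Definition grscale (F : fieldType) (A : algType F) (c : F)
  (G : nat -> nat -> A) : nat -> nat -> A := fun i j => c *: G i j.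

Definition grmul (F : fieldType) (A : algType F) (G G' : nat -> nat -> A) :
  nat -> nat -> A :=
  fun a b => \sum_(i < a.+1) \sum_(j < b.+1) G i j * G' (a - i)%N (b - j)%N.

Definition grsingle (F : fieldType) (A : algType F) (i0 j0 : nat) (v : A) :
  nat -> nat -> A := fun i j => if (i == i0) && (j == j0) then v else 0.

(* phi : Gr(A) -> B is an F-algebra isomorphism (Gr presented as the setoid
   of representatives modulo grequiv) sending xbar, ybar, hbar to x', y', h'. *)
Definition gr_iso (F : fieldType) (A : algType F) (x y h : A)
  (B : algType F) (x' y' h' : B) (phi : (nat -> nat -> A) -> B) : Prop :=
  (forall G G', grfam x y h G -> grfam x y h G' -> grfam x y h (grmul G G')) /\
  (forall G G', grfam x y h G -> grfam x y h G' ->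
     (phi G = phi G' <-> grequiv x y h G G')) /\
  (forall b : B, exists2 G, grfam x y h G & phi G = b) /\
  (forall G G', grfam x y h G -> grfam x y h G' ->
     phi (gradd G G') = phi G + phi G') /\
  (forall c G, grfam x y h G -> phi (grscale c G) = c *: phi G) /\
  (forall G G', grfam x y h G -> grfam x y h G' ->
     phi (grmul G G') = phi G * phi G') /\
  phi (grsingle 0 0 1) = 1 /\
  phi (grsingle 1 0 x) = x' /\
  phi (grsingle 0 1 y) = y' /\
  phi (grsingle 0 0 h) = h'.

(* Main.v *)
Require Import Defs.
From HB Require Import structures.
From mathcomp Require Import all_boot all_order all_algebra.
From mathcomp Require Import zify ring.
From Stdlib Require Import ClassicalEpsilon.
Set Implicit Arguments. Unset Strict Implicit. Unset Printing Implicit Defensive.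
Import Order.TTheory GRing.Theory.
Local Open Scope ring_scope.

Section Peval.
Variables (F : fieldType) (A : algType F).

Lemma pevalE (p : {poly F}) (a : A) : peval p a = horner_alg a p.
Proof.
rewrite /peval /horner_alg /horner_morph /= horner_coef size_map_poly.
by apply: eq_bigr => i _; rewrite coef_map /= mulr_algl.
Qed.

Lemma pevalD p r (a : A) : peval (p + r) a = peval p a + peval r a.
Proof. by rewrite !pevalE rmorphD. Qed.
Lemma pevalM p r (a : A) : peval (p * r) a = peval p a * peval r a.
Proof. by rewrite !pevalE rmorphM. Qed.
Lemma pevalZ c p (a : A) : peval (c *: p) a = c *: peval p a.
Proof. by rewrite !pevalE -mul_polyC rmorphM /= horner_algC mulr_algl. Qed.
Lemma peval0 (a : A) : peval 0 a = 0.
Proof. by rewrite pevalE rmorph0. Qed.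
Lemma peval1 (a : A) : peval 1 a = 1.
Proof. by rewrite pevalE rmorph1. Qed.
Lemma pevalX (a : A) : peval 'X a = a.
Proof. by rewrite pevalE horner_algX. Qed.
Lemma pevalN p (a : A) : peval (- p) a = - peval p a.
Proof. by rewrite !pevalE rmorphN. Qed.
Lemma pevalB p r (a : A) : peval (p - r) a = peval p a - peval r a.
Proof. by rewrite !pevalE rmorphB. Qed.
Lemma pevalXn p n (a : A) : peval (p ^+ n) a = peval p a ^+ n.
Proof. by rewrite !pevalE rmorphXn. Qed.

Lemma peval_comp p r (a : A) : peval (p \Po r) a = peval p (peval r a).
Proof.
rewrite comp_polyE {2}/peval !pevalE raddf_sum /=.
by apply: eq_bigr => i _; rewrite -mul_polyC rmorphM /= horner_algC mulr_algl rmorphXn.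
Qed.
End Peval.
Lemma addsub3 (V : zmodType) (a b c : V) : a + b + c - a = b + c.
Proof. by rewrite addrAC (addrAC a) subrr add0r. Qed.

Lemma sum_single (V : zmodType) N (G : nat -> V) i :
  (i < N)%N -> (forall k, (k < N)%N -> k != i -> G k = 0) ->
  \sum_(k < N) G k = G i.
Proof.
move=> Hi H; rewrite (bigD1 (Ordinal Hi)) //= big1 ?addr0 // => k Hk.
apply: H => //; move: Hk; apply: contra => /eqP e; apply/eqP/val_inj.
Qed.

Lemma sum_widen0 (V : zmodType) N K (G : nat -> V) :
  (N <= K)%N -> (forall k, (N <= k)%N -> (k < K)%N -> G k = 0) ->
  \sum_(k < N) G k = \sum_(k < K) G k.
Proof.
move=> HNK H; rewrite (big_ord_widen K G HNK) big_mkcond /=.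
apply: eq_bigr => k _; case: ltnP => // Hk; rewrite H //.
Qed.

Definition trunc (F : fieldType) N (P : nat -> nat -> {poly F}) :=
  fun i j => if (i < N)%N && (j < N)%N then P i j else 0.

Lemma sum_ifw (V : zmodType) n K (G : nat -> V) : (n <= K)%N ->
  \sum_(i < n) G i = \sum_(i < K) (if (i < n)%N then G i else 0).
Proof. by move=> H; rewrite (big_ord_widen K G H) big_mkcond. Qed.

Lemma cauchy (V : zmodType) N (G : nat -> nat -> nat -> nat -> V) a b :
  (forall i j k l, (N <= i)%N || (N <= j)%N || (N <= k)%N || (N <= l)%N ->
     G i j k l = 0) ->
  \sum_(i1 < N) \sum_(j1 < N) \sum_(k1 < N) \sum_(l1 < N)
    (if ((i1 + k1)%N == a) && ((j1 + l1)%N == b) then G i1 j1 k1 l1 else 0) =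
  \sum_(i < a.+1) \sum_(j < b.+1) G i j (a - i)%N (b - j)%N.
Proof.
move=> HG.
have step : forall i1 j1 : nat,
  \sum_(k1 < N) \sum_(l1 < N)
    (if ((i1 + k1)%N == a) && ((j1 + l1)%N == b) then G i1 j1 k1 l1 else 0) =
  if (i1 <= a)%N && (j1 <= b)%N then G i1 j1 (a - i1)%N (b - j1)%N else 0.
  move=> i1 j1.
  have inner : forall k1 : nat, \sum_(l1 < N)
    (if ((i1 + k1)%N == a) && ((j1 + l1)%N == b) then G i1 j1 k1 l1 else 0) =
    if ((i1 + k1)%N == a) && (j1 <= b)%N then G i1 j1 k1 (b - j1)%N else 0.
    move=> k1; case: (boolP ((j1 <= b)%N)) => Hjb; last first.
      rewrite andbF big1 // => l1 _; case: ifP => //; lia.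
    case: (ltnP (b - j1) N) => HbN.
      rewrite andbT (@sum_single _ N (fun l1 => if ((i1 + k1)%N == a) && ((j1 + l1)%N == b)
         then G i1 j1 k1 l1 else 0) (b - j1) HbN); last first.
        move=> l1 _ Hl; case: ifP => //; lia.
      have -> : (j1 + (b - j1) == b)%N by lia.
      by rewrite andbT.
    rewrite big1; last by move=> l1 _; have := ltn_ord l1; case: ifP => //; lia.
    by rewrite andbT; case: ifP => //; rewrite HG // HbN !orbT.
  under eq_bigr => k1 _ do rewrite inner.
  case: (boolP ((i1 <= a)%N)) => Hia; last first.
    rewrite big1 // => k1 _; case: ifP => //; lia.
  case: (ltnP (a - i1) N) => HaN.
    rewrite /= (@sum_single _ N (fun k1 => if ((i1 + k1)%N == a) && (j1 <= b)%N
         then G i1 j1 k1 (b - j1)%N else 0) (a - i1) HaN); last first.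
      move=> k1 _ Hk; case: ifP => //; lia.
    have -> : (i1 + (a - i1) == a)%N by lia.
    by [].
  rewrite big1; last by move=> k1 _; have := ltn_ord k1; case: ifP => //; lia.
  by case: ifP => //; rewrite HG // HaN !orbT.
under eq_bigr => i1 _ do under eq_bigr => j1 _ do rewrite step.
set K := maxn N (maxn a.+1 b.+1).
have HNK : (N <= K)%N by rewrite leq_maxl.
have HaK : (a.+1 <= K)%N by rewrite /K; lia.
have HbK : (b.+1 <= K)%N by rewrite /K; lia.
rewrite (@sum_ifw _ N K (fun i1 => \sum_(j1 < N) (if (i1 <= a)%N && (j1 <= b)%N then G i1 j1 (a - i1)%N (b - j1)%N else 0)) HNK).
rewrite (@sum_ifw _ a.+1 K (fun i => \sum_(j < b.+1) G i j (a - i)%N (b - j)%N) HaK).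
apply: eq_bigr => i _.
case: (ltnP i N) => HiN; case: (ltnP i a.+1) => Hia.
- rewrite (@sum_ifw _ N K (fun j1 => (if (i <= a)%N && (j1 <= b)%N then G i j1 (a - i)%N (b - j1)%N else 0)) HNK).
  rewrite (@sum_ifw _ b.+1 K (fun j => G i j (a - i)%N (b - j)%N) HbK).
  apply: eq_bigr => j _.
  case: (ltnP j N) => HjN; case: (ltnP j b.+1) => Hjb //=.
  + by rewrite ifT //; apply/andP; split; [move: Hia | move: Hjb]; rewrite ltnS.
  + by case: ifP => //; lia.
  + by rewrite HG // HjN !orbT.
- by rewrite big1 // => j _; case: ifP => //; lia.
- by rewrite big1 // => j _; rewrite HG // HiN.
- by [].
Qed.

Section Rels.
Variables (F : fieldType) (A : algType F) (q : F) (f g : {poly F}) (x y h : A).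
Hypothesis Hhx : h * x = x * peval f h.
Hypothesis Hyh : y * h = peval f h * y.
Hypothesis Hyx : y * x - q *: (x * y) = peval g h.

Definition sig (k : nat) (p : {poly F}) := iter k (fun r => r \Po f) p.

Lemma sig0 k : sig k 0 = 0.
Proof. by elim: k => //= k ->; rewrite comp_poly0. Qed.
Lemma sigS k p : sig k.+1 p = sig k (p \Po f).
Proof. by rewrite /sig iterSr. Qed.

Lemma hXn_x n : h ^+ n * x = x * peval f h ^+ n.
Proof.
elim: n => [|n IH]; first by rewrite !expr0 mul1r mulr1.
by rewrite exprSr -mulrA Hhx mulrA IH -mulrA -exprSr.
Qed.

Lemma px p : peval p h * x = x * peval (p \Po f) h.
Proof.
rewrite peval_comp /peval mulr_suml mulr_sumr; apply: eq_bigr => i _.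
by rewrite -scalerAl hXn_x scalerAr.
Qed.

Lemma pxk k p : peval p h * x ^+ k = x ^+ k * peval (sig k p) h.
Proof.
elim: k p => [|k IH] p; first by rewrite !expr0 mul1r mulr1.
by rewrite exprS mulrA px -mulrA IH mulrA sigS.
Qed.

Lemma y_hn n : y * h ^+ n = peval f h ^+ n * y.
Proof.
elim: n => [|n IH]; first by rewrite !expr0 mul1r mulr1.
by rewrite exprSr mulrA IH -mulrA Hyh mulrA -exprSr.
Qed.

Lemma yp p : y * peval p h = peval (p \Po f) h * y.
Proof.
rewrite peval_comp /peval mulr_suml mulr_sumr; apply: eq_bigr => i _.
by rewrite -scalerAr y_hn scalerAl.
Qed.

Lemma ykp k p : y ^+ k * peval p h = peval (sig k p) h * y ^+ k.
Proof.
elim: k p => [|k IH] p; first by rewrite !expr0 mul1r mulr1.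
by rewrite exprSr -mulrA yp mulrA IH -mulrA -exprSr sigS.
Qed.

Definition mono i p j := x ^+ i * peval p h * y ^+ j.
Definition monot (t : nat * {poly F} * nat) := mono t.1.1 t.1.2 t.2.

Lemma mono0 i j : mono i 0 j = 0.
Proof. by rewrite /mono peval0 mulr0 mul0r. Qed.
Lemma monoZ i c p j : mono i (c *: p) j = c *: mono i p j.
Proof. by rewrite /mono pevalZ -scalerAr -scalerAl. Qed.
Lemma monoD i p r j : mono i (p + r) j = mono i p j + mono i r j.
Proof. by rewrite /mono pevalD mulrDr mulrDl. Qed.

Lemma xmono m i p j : x ^+ m * mono i p j = mono (m + i) p j.
Proof. by rewrite /mono exprD !mulrA. Qed.
Lemma pmono s i p j : peval s h * mono i p j = mono i (sig i s * p) j.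
Proof. by rewrite /mono !mulrA pxk pevalM !mulrA. Qed.
Lemma monop i p j r : mono i p j * peval r h = mono i (p * sig j r) j.
Proof. by rewrite /mono -!mulrA ykp pevalM !mulrA. Qed.
Lemma monoy i p j l : mono i p j * y ^+ l = mono i p (j + l).
Proof. by rewrite /mono exprD !mulrA. Qed.

Definition XL (n : nat) (a : A) := exists s : seq (nat * {poly F} * nat),
  all (fun t => (t.1.1 < n)%N) s /\ a = \sum_(t <- s) monot t.

Lemma XL0 n : XL n 0.
Proof. by exists [::]; rewrite big_nil. Qed.
Lemma XLD n a b : XL n a -> XL n b -> XL n (a + b).
Proof.
move=> [s [Hs ->]] [t [Ht ->]]; exists (s ++ t).
by rewrite all_cat Hs Ht big_cat.
Qed.
Lemma XLZ n c a : XL n a -> XL n (c *: a).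
Proof.
move=> [s [Hs ->]]; exists (map (fun t => (t.1.1, c *: t.1.2, t.2)) s).
split; first by rewrite all_map.
by rewrite big_map scaler_sumr; apply: eq_bigr => t _; rewrite /monot monoZ.
Qed.
Lemma XLN n a : XL n a -> XL n (- a).
Proof. by move=> H; rewrite -scaleN1r; apply: XLZ. Qed.
Lemma XLB n a b : XL n a -> XL n b -> XL n (a - b).
Proof. by move=> Ha Hb; apply: XLD => //; apply: XLN. Qed.
Lemma XL_mono n i p j : (i < n)%N -> XL n (mono i p j).
Proof. by move=> Hi; exists [:: (i, p, j)]; rewrite /= Hi big_seq1. Qed.
Lemma XL_le n m a : (n <= m)%N -> XL n a -> XL m a.
Proof.
move=> Hnm [s [Hs ->]]; exists s; split=> //.
by apply: sub_all Hs => t /= Ht; apply: leq_trans Hnm.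
Qed.

Lemma XL_mulr n n' z a :
  (forall i p j, (i < n)%N -> XL n' (mono i p j * z)) -> XL n a -> XL n' (a * z).
Proof.
move=> H [s [Hs ->]]; elim: s Hs => [|t s IH] /=.
  by rewrite big_nil mul0r => _; apply: XL0.
move=> /andP [Ht Hs]; rewrite big_cons mulrDl; apply: XLD; last exact: IH.
exact: H.
Qed.
Lemma XL_mull n n' z a :
  (forall i p j, (i < n)%N -> XL n' (z * mono i p j)) -> XL n a -> XL n' (z * a).
Proof.
move=> H [s [Hs ->]]; elim: s Hs => [|t s IH] /=.
  by rewrite big_nil mulr0 => _; apply: XL0.
move=> /andP [Ht Hs]; rewrite big_cons mulrDr; apply: XLD; last exact: IH.
exact: H.
Qed.

Lemma XL_x m n a : XL n a -> XL (m + n) (x ^+ m * a).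
Proof.
apply: XL_mull => i p j Hi; rewrite xmono; apply: XL_mono; by rewrite ltn_add2l.
Qed.
Lemma XL_p s n a : XL n a -> XL n (peval s h * a).
Proof. by apply: XL_mull => i p j Hi; rewrite pmono; apply: XL_mono. Qed.
Lemma XL_pr s n a : XL n a -> XL n (a * peval s h).
Proof. by apply: XL_mulr => i p j Hi; rewrite monop; apply: XL_mono. Qed.
Lemma XL_yr l n a : XL n a -> XL n (a * y ^+ l).
Proof. by apply: XL_mulr => i p j Hi; rewrite monoy; apply: XL_mono. Qed.
Lemma XL_y a : XL 1 a -> XL 1 (y * a).
Proof.
apply: XL_mull => i p j; rewrite ltnS leqn0 => /eqP ->.
rewrite /mono expr0 mul1r mulrA yp -mulrA -exprS.
have -> : peval (p \Po f) h * y ^+ j.+1 = mono 0 (p \Po f) j.+1.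
  by rewrite /mono expr0 mul1r.
exact: XL_mono.
Qed.

Lemma Hyx' : y * x = q *: (x * y) + peval g h.
Proof. by rewrite -Hyx addrC subrK. Qed.

Lemma K1a j : XL 1 (y ^+ j * x - q ^+ j *: (x * y ^+ j)).
Proof.
elim: j => [|j IH].
  by rewrite !expr0 mul1r mulr1 scale1r subrr; apply: XL0.
set E := (_ - _) in IH.
have HE : y ^+ j * x = q ^+ j *: (x * y ^+ j) + E by rewrite /E addrC subrK.
rewrite exprS -mulrA HE mulrDr -scalerAr (mulrA y x) Hyx' mulrDl scalerDr.
rewrite -scalerAl scalerA -(mulrA x) -exprS -exprSr addsub3.
apply: XLD; last exact: XL_y.
apply: XLZ.
have -> : peval g h * y ^+ j = mono 0 g j by rewrite /mono expr0 mul1r.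
exact: XL_mono.
Qed.

Lemma XL_xr n a : XL n a -> XL n.+1 (a * x).
Proof.
apply: XL_mulr => i p j Hi.
have E1 := K1a j; set E := (_ - _) in E1.
have HE : y ^+ j * x = q ^+ j *: (x * y ^+ j) + E by rewrite /E addrC subrK.
rewrite /mono -mulrA HE mulrDr -scalerAr.
have -> : x ^+ i * peval p h * (x * y ^+ j) = mono i.+1 (p \Po f) j.
  by rewrite /mono mulrA -(mulrA (x ^+ i)) px mulrA -exprSr.
apply: XLD; first by apply: XLZ; apply: XL_mono.
rewrite -mulrA.
apply: (@XL_le (i + 1)); first by rewrite addn1 ltnS ltnW.
by apply: XL_x; apply: XL_p.
Qed.

Lemma K1 j k : XL k (y ^+ j * x ^+ k - q ^+ (j * k) *: (x ^+ k * y ^+ j)).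
Proof.
elim: k => [|k IH].
  by rewrite muln0 !expr0 mulr1 mul1r scale1r subrr; apply: XL0.
set E := (_ - _) in IH.
have HE : y ^+ j * x ^+ k = q ^+ (j * k) *: (x ^+ k * y ^+ j) + E
  by rewrite /E addrC subrK.
have E1 := K1a j; set E' := (_ - _) in E1.
have HE' : y ^+ j * x = q ^+ j *: (x * y ^+ j) + E' by rewrite /E' addrC subrK.
rewrite exprSr mulrA HE mulrDl -scalerAl -(mulrA (x ^+ k) (y ^+ j) x) HE' mulrDr -scalerAr.
rewrite scalerDr scalerA mulrA -exprSr -exprD mulnS addnC addsub3.
apply: XLD; last exact: XL_xr.
apply: XLZ.
rewrite -addn1; exact: XL_x.
Qed.

Lemma MP_eq i p j k r l :
  x ^+ i * peval p h * (x ^+ k * y ^+ j) * (peval r h * y ^+ l) =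
  mono (i + k) (sig k p * sig j r) (j + l).
Proof.
rewrite /mono !exprD pevalM !mulrA -(mulrA (x ^+ i) (peval p h) (x ^+ k)) pxk.
rewrite !mulrA -(mulrA _ (y ^+ j) (peval r h)) ykp !mulrA //.
Qed.

Lemma MP i p j k r l :
  XL (i + k) (mono i p j * mono k r l -
              q ^+ (j * k) *: mono (i + k) (sig k p * sig j r) (j + l)).
Proof.
have E1 := K1 j k; set D := (_ - _) in E1.
have HD : y ^+ j * x ^+ k = q ^+ (j * k) *: (x ^+ k * y ^+ j) + D
  by rewrite /D addrC subrK.
have -> : mono i p j * mono k r l =
   x ^+ i * peval p h * (y ^+ j * x ^+ k) * (peval r h * y ^+ l)
  by rewrite /mono !mulrA.
rewrite HD mulrDr mulrDl -scalerAr -scalerAl MP_eq addrC addKr.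
rewrite mulrA; apply: XL_yr; apply: XL_pr; rewrite -mulrA; apply: XL_x.
exact: XL_p.
Qed.

Hypothesis Hg0 : peval g h = 0.

Lemma K1ex j k : y ^+ j * x ^+ k = q ^+ (j * k) *: (x ^+ k * y ^+ j).
Proof.
have Hyx0 : y * x = q *: (x * y) by rewrite Hyx' Hg0 addr0.
have H1 : forall j, y ^+ j * x = q ^+ j *: (x * y ^+ j).
  elim=> [|n IH]; first by rewrite !expr0 mul1r mulr1 scale1r.
  rewrite exprS -mulrA IH -scalerAr (mulrA y x) Hyx0 -scalerAl scalerA -mulrA -exprS.
  by rewrite -exprSr.
elim: k => [|k IH]; first by rewrite muln0 !expr0 mulr1 mul1r scale1r.
rewrite exprSr mulrA IH -scalerAl -(mulrA (x ^+ k) (y ^+ j) x) H1 -scalerAr scalerA mulrA -exprSr.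
by rewrite -exprD mulnS addnC.
Qed.

Lemma MPex i p j k r l :
  mono i p j * mono k r l = q ^+ (j * k) *: mono (i + k) (sig k p * sig j r) (j + l).
Proof.
have -> : mono i p j * mono k r l =
   x ^+ i * peval p h * (y ^+ j * x ^+ k) * (peval r h * y ^+ l)
  by rewrite /mono !mulrA.
by rewrite K1ex -scalerAr -scalerAl MP_eq.
Qed.


Hypothesis Hspan : forall a : A, exists N P, a = nf x y h N P.
Hypothesis Huniq : forall N P, nf x y h N P = 0 ->
     forall i j, (i < N)%N -> (j < N)%N -> P i j = 0.
Local Notation nf := (nf x y h).

Lemma nfE N P : nf N P = \sum_(i < N) \sum_(j < N) mono i (P i j) j.
Proof. by []. Qed.

Lemma nf_ext N P Q : (forall i j, (i < N)%N -> (j < N)%N -> P i j = Q i j) ->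
  nf N P = nf N Q.
Proof.
move=> H; rewrite !nfE; apply: eq_bigr => i _; apply: eq_bigr => j _.
by rewrite H.
Qed.

Lemma nf_bound N K P : (N <= K)%N ->
  (forall i j, (N <= i)%N || (N <= j)%N -> P i j = 0) -> nf N P = nf K P.
Proof.
move=> HNK H; rewrite !nfE (@sum_widen0 _ N K (fun i => \sum_(j < N) mono i (P i j) j) HNK).
  apply: eq_bigr => i _; case: (ltnP i N) => Hi.
    apply: (@sum_widen0 _ N K (fun j => mono i (P i j) j) HNK).
    by move=> k Hk _; rewrite H ?mono0 // Hk orbT.
  rewrite !big1 // => j _; by rewrite H ?mono0 // Hi.
by move=> k Hk _; rewrite big1 // => j _; rewrite H ?mono0 // Hk.
Qed.

Lemma nf_widen N K P : (N <= K)%N -> nf N P = nf K (trunc N P).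
Proof.
move=> HNK; rewrite -(nf_bound (P := trunc N P) HNK).
  by apply: nf_ext => i j Hi Hj; rewrite /trunc Hi Hj.
by move=> i j; rewrite /trunc; case/orP => H; rewrite leqNgt in H;
  rewrite (negbTE H) //= andbF.
Qed.

Lemma nfD N P Q : nf N (fun i j => P i j + Q i j) = nf N P + nf N Q.
Proof.
rewrite !nfE -big_split; apply: eq_bigr => i _; rewrite -big_split.
by apply: eq_bigr => j _; rewrite monoD.
Qed.

Lemma nfZ c N P : nf N (fun i j => c *: P i j) = c *: nf N P.
Proof.
rewrite !nfE scaler_sumr; apply: eq_bigr => i _; rewrite scaler_sumr.
by apply: eq_bigr => j _; rewrite monoZ.
Qed.

Lemma nfB N P Q : nf N (fun i j => P i j - Q i j) = nf N P - nf N Q.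
Proof.
rewrite -(scaleN1r (nf N Q)) -nfZ -nfD; apply: nf_ext => i j _ _.
by rewrite scaleN1r.
Qed.

Lemma nf_uniq N P M Q : nf N P = nf M Q ->
  forall i j, trunc N P i j = trunc M Q i j.
Proof.
move=> E i j; set K := maxn N M.
have HN : (N <= K)%N by rewrite leq_maxl.
have HM : (M <= K)%N by rewrite leq_maxr.
have : nf K (fun a b => trunc N P a b - trunc M Q a b) = 0.
  by rewrite nfB -nf_widen // -nf_widen // E subrr.
move/Huniq => H.
case: (ltnP i K) => Hi; last first.
  by rewrite /trunc (leq_gtF (leq_trans HN Hi)) (leq_gtF (leq_trans HM Hi)).
case: (ltnP j K) => Hj; last first.
  by rewrite /trunc (leq_gtF (leq_trans HN Hj)) (leq_gtF (leq_trans HM Hj)) !andbF.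
by apply/eqP; rewrite -subr_eq0; apply/eqP; apply: H.
Qed.

Lemma span' (a : A) : exists NP : nat * (nat -> nat -> {poly F}), a = nf NP.1 NP.2.
Proof. by case: (Hspan a) => N [P E]; exists (N, P). Qed.

Definition coef (a : A) : nat -> nat -> {poly F} :=
  let NP := proj1_sig (constructive_indefinite_description _ (span' a)) in
  trunc NP.1 NP.2.

Lemma coef_spec a : exists N P, a = nf N P /\ coef a = trunc N P.
Proof.
rewrite /coef; case: (constructive_indefinite_description _ _) => [[N P] /= E].
by exists N, P.
Qed.

Lemma coef_nf M Q i j : coef (nf M Q) i j = trunc M Q i j.
Proof.
have [N [P [E ->]]] := coef_spec (nf M Q).
by apply: nf_uniq.
Qed.

Definition supp (a : A) N := forall i j, (N <= i)%N || (N <= j)%N -> coef a i j = 0.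

Lemma exists_supp a : exists N, supp a N.
Proof.
have [N [P [E Hc]]] := coef_spec a; exists N => i j H.
rewrite Hc /trunc; case/orP: H => H; rewrite leqNgt in H; by rewrite (negbTE H) ?andbF.
Qed.

Lemma supp_le a N M : supp a N -> (N <= M)%N -> supp a M.
Proof.
move=> H HNM i j Hij; apply: H; case/orP: Hij => H'.
  by rewrite (leq_trans HNM H').
by rewrite (leq_trans HNM H') orbT.
Qed.

Lemma nf_supp a N : supp a N -> a = nf N (coef a).
Proof.
move=> Hs; have [N0 [P [E Hc]]] := coef_spec a.
set K := maxn N N0.
have -> : nf N (coef a) = nf K (coef a) by apply: nf_bound; [exact: leq_maxl | exact: Hs].
by rewrite Hc -nf_widen ?leq_maxr.
Qed.

Lemma coef_inj a b : (forall i j, coef a i j = coef b i j) -> a = b.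
Proof.
move=> H; have [N HN] := exists_supp a; have [M HM] := exists_supp b.
rewrite (nf_supp (supp_le HN (leq_maxl N M))) (nf_supp (supp_le HM (leq_maxr N M))).
by apply: nf_ext => i j _ _; rewrite H.
Qed.

Lemma supp_common a b : exists N, supp a N /\ supp b N.
Proof.
have [N HN] := exists_supp a; have [M HM] := exists_supp b.
by exists (maxn N M); split; [apply: (supp_le HN) | apply: (supp_le HM)];
  rewrite ?leq_maxl ?leq_maxr.
Qed.

Lemma coefD a b i j : coef (a + b) i j = coef a i j + coef b i j.
Proof.
have [N [Ha Hb]] := supp_common a b.
rewrite {1}(nf_supp Ha) {1}(nf_supp Hb) -nfD coef_nf /trunc.
case: ifP => // /negbT; rewrite negb_and -!leqNgt => H.
by rewrite Ha ?Hb ?addr0.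
Qed.

Lemma coefZ c a i j : coef (c *: a) i j = c *: coef a i j.
Proof.
have [N Ha] := exists_supp a.
rewrite {1}(nf_supp Ha) -nfZ coef_nf /trunc.
case: ifP => // /negbT; rewrite negb_and -!leqNgt => H.
by rewrite Ha ?scaler0.
Qed.

Lemma coef0 i j : coef 0 i j = 0.
Proof. by rewrite -(scale0r 0) coefZ scale0r. Qed.

Lemma coefN a i j : coef (- a) i j = - coef a i j.
Proof. by rewrite -scaleN1r coefZ scaleN1r. Qed.

Lemma coefB a b i j : coef (a - b) i j = coef a i j - coef b i j.
Proof. by rewrite coefD coefN. Qed.

Lemma coef_sum (I : Type) (r : seq I) (P : pred I) (G : I -> A) i j :
  coef (\sum_(k <- r | P k) G k) i j = \sum_(k <- r | P k) coef (G k) i j.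
Proof.
elim: r => [|t r IH]; first by rewrite !big_nil coef0.
by rewrite !big_cons; case: (P t) => //; rewrite coefD IH.
Qed.

Definition delta (i j : nat) (p : {poly F}) : nat -> nat -> {poly F} :=
  fun a b => if (a == i) && (b == j) then p else 0.

Lemma nf_delta N i j p : (i < N)%N -> (j < N)%N -> nf N (delta i j p) = mono i p j.
Proof.
move=> Hi Hj; rewrite nfE (@sum_single _ N (fun a => \sum_(b < N) mono a (delta i j p a b) b) i Hi).
  rewrite (@sum_single _ N (fun b => mono i (delta i j p i b) b) j Hj); first by rewrite /delta !eqxx.
  by move=> k _ Hk; rewrite /delta eqxx (negbTE Hk) mono0.
by move=> k _ Hk; rewrite big1 // => l _; rewrite /delta (negbTE Hk) mono0.
Qed.

Lemma coef_mono i p j k l : coef (mono i p j) k l = delta i j p k l.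
Proof.
rewrite -(@nf_delta (maxn i j).+1) ?ltnS ?leq_maxl ?leq_maxr // coef_nf /trunc.
case: ifP => // /negbT; rewrite negb_and -!leqNgt /delta => /orP [] H.
  by case: eqP => // E; move: H; rewrite E ltnNge leq_maxl.
by case: (k == i) => //=; case: eqP => // E; move: H; rewrite E ltnNge leq_maxr.
Qed.

Lemma coef_XL n a k l : XL n a -> (n <= k)%N -> coef a k l = 0.
Proof.
move=> [s [Hs ->]] Hk; rewrite coef_sum big1_seq // => t /andP [_ Ht].
rewrite /monot coef_mono /delta; case: eqP => //= E.
by move/allP: Hs => /(_ t Ht); rewrite -E ltnNge Hk.
Qed.


Lemma filtE i j a : filt x y h i j a <-> forall k l, lexlt i j k l -> coef a k l = 0.
Proof.
split.
  move=> [N [P [-> H]]] k l Hkl; rewrite coef_nf /trunc H //; by case: ifP.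
move=> H; have [N HN] := exists_supp a; exists N, (coef a); split => //.
exact: nf_supp.
Qed.

Lemma filtmE i j a : filtm x y h i j a <-> forall k l, ~~ lexlt k l i j -> coef a k l = 0.
Proof.
split.
  move=> [N [P [-> H]]] k l Hkl; rewrite coef_nf /trunc H //; by case: ifP.
move=> H; have [N HN] := exists_supp a; exists N, (coef a); split => //.
exact: nf_supp.
Qed.

Lemma arith i j k l i1 j1 k1 l1 a b :
  ~~ lexlt i j i1 j1 -> ~~ lexlt k l k1 l1 ->
  lexlt (i + k) (j + l) a b || ((a == i + k) && (b == j + l)) ->
  ((a == i1 + k1) && (b == j1 + l1)) =
  [&& i1 == i, j1 == j, k1 == k, l1 == l, a == i + k & b == j + l].
Proof. rewrite /lexlt => H1 H2 H3. apply/idP/idP; lia. Qed.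

Lemma arith2 i j i1 j1 : lexlt i j i1 j1 -> (i1 == i) && (j1 == j) = false.
Proof. rewrite /lexlt => H; apply/negbTE; lia. Qed.


Definition lead (u v : A) i j k l :=
  q ^+ (j * k) *: (sig k (coef u i j) * sig j (coef v k l)).

Lemma prod_term (u v : A) i j k l a b i1 j1 k1 l1 :
  filt x y h i j u -> filt x y h k l v ->
  lexlt (i + k) (j + l) a b || ((a == i + k) && (b == j + l)) ->
  coef (mono i1 (coef u i1 j1) j1 * mono k1 (coef v k1 l1) l1) a b =
  if [&& i1 == i, j1 == j, k1 == k, l1 == l, a == i + k & b == j + l]
  then lead u v i j k l else 0.
Proof.
move=> /filtE Hu /filtE Hv C.
case: (boolP (lexlt i j i1 j1)) => H1.
  rewrite Hu // mono0 mul0r coef0; move: (arith2 H1) => E1.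
  symmetry; case: ifP => //; case/andP => /eqP e1 /and5P [/eqP e2 _ _ _ _].
  by rewrite e1 e2 !eqxx in E1.
case: (boolP (lexlt k l k1 l1)) => H2.
  rewrite (Hv _ _ H2) mono0 mulr0 coef0; move: (arith2 H2) => E1.
  symmetry; case: ifP => //; case/andP => _ /and5P [_ /eqP e1 /eqP e2 _ _].
  by rewrite e1 e2 !eqxx in E1.
have E := MP i1 (coef u i1 j1) j1 k1 (coef v k1 l1) l1.
set D := (_ - _) in E.
have -> : mono i1 (coef u i1 j1) j1 * mono k1 (coef v k1 l1) l1 =
  q ^+ (j1 * k1) *: mono (i1 + k1) (sig k1 (coef u i1 j1) * sig j1 (coef v k1 l1)) (j1 + l1) + D
  by rewrite /D addrC subrK.
rewrite coefD (coef_XL _ E); last first.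
  move: H1 H2 C; rewrite /lexlt => H1 H2 C; lia.
rewrite addr0 coefZ coef_mono /delta (arith H1 H2 C).
case: (boolP [&& _, _, _, _ & _]) => //; last by rewrite scaler0.
by case/andP => /eqP -> /and5P [/eqP -> /eqP -> /eqP -> _ _].
Qed.

Lemma nf_mul N P Q : nf N P * nf N Q =
  \sum_(i1 < N) \sum_(j1 < N) \sum_(k1 < N) \sum_(l1 < N)
     (mono i1 (P i1 j1) j1 * mono k1 (Q k1 l1) l1).
Proof.
rewrite !nfE mulr_suml; apply: eq_bigr => i1 _; rewrite mulr_suml.
apply: eq_bigr => j1 _; rewrite mulr_sumr; apply: eq_bigr => k1 _.
by rewrite mulr_sumr.
Qed.

Lemma coef_sum4 N (G : nat -> nat -> nat -> nat -> A) a b :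
  coef (\sum_(i1 < N) \sum_(j1 < N) \sum_(k1 < N) \sum_(l1 < N) G i1 j1 k1 l1) a b =
  \sum_(i1 < N) \sum_(j1 < N) \sum_(k1 < N) \sum_(l1 < N) coef (G i1 j1 k1 l1) a b.
Proof.
rewrite coef_sum; apply: eq_bigr => i1 _; rewrite coef_sum.
apply: eq_bigr => j1 _; rewrite coef_sum; apply: eq_bigr => k1 _.
by rewrite coef_sum.
Qed.

Lemma sum4_single (V : zmodType) N i j k l (c : bool) (X : V) :
  (i < N)%N -> (j < N)%N -> (k < N)%N -> (l < N)%N ->
  \sum_(i1 < N) \sum_(j1 < N) \sum_(k1 < N) \sum_(l1 < N)
    (if [&& (i1 : nat) == i, (j1 : nat) == j, (k1 : nat) == k, (l1 : nat) == l & c]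
     then X else 0) = if c then X else 0.
Proof.
move=> Hi Hj Hk Hl.
rewrite (@sum_single _ N (fun i1 => \sum_(j1 < N) \sum_(k1 < N) \sum_(l1 < N)
    (if [&& i1 == i, (j1 : nat) == j, (k1 : nat) == k, (l1 : nat) == l & c]
     then X else 0)) i Hi); last first.
  by move=> i1 _ Hne; do 3! (apply: big1 => ? _); rewrite (negbTE Hne).
rewrite (@sum_single _ N (fun j1 => \sum_(k1 < N) \sum_(l1 < N)
    (if [&& i == i, j1 == j, (k1 : nat) == k, (l1 : nat) == l & c]
     then X else 0)) j Hj); last first.
  by move=> j1 _ Hne; do 2! (apply: big1 => ? _); rewrite (negbTE Hne) /= ?andbF.
rewrite (@sum_single _ N (fun k1 => \sum_(l1 < N)
    (if [&& i == i, j == j, k1 == k, (l1 : nat) == l & c]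
     then X else 0)) k Hk); last first.
  by move=> k1 _ Hne; (apply: big1 => ? _); rewrite (negbTE Hne) /= ?andbF.
rewrite (@sum_single _ N (fun l1 =>
    (if [&& i == i, j == j, k == k, l1 == l & c]
     then X else 0)) l Hl); last first.
  by move=> l1 _ Hne; rewrite (negbTE Hne) /= ?andbF.
by rewrite !eqxx.
Qed.

Lemma prod_coef (u v : A) i j k l a b :
  filt x y h i j u -> filt x y h k l v ->
  lexlt (i + k) (j + l) a b || ((a == i + k) && (b == j + l)) ->
  coef (u * v) a b = if (a == i + k) && (b == j + l) then lead u v i j k l else 0.
Proof.
move=> Hu Hv C.
have [N0 [Hu0 Hv0]] := supp_common u v.
set N := maxn N0 (i + j + k + l).+1.
have HN : (N0 <= N)%N by rewrite leq_maxl.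
have HN2 : ((i + j + k + l).+1 <= N)%N by rewrite leq_maxr.
have -> : u * v = nf N (coef u) * nf N (coef v).
  by rewrite -!nf_supp //; [apply: (supp_le Hv0) | apply: (supp_le Hu0)].
rewrite nf_mul (coef_sum4 N (fun i1 j1 k1 l1 => mono i1 (coef u i1 j1) j1 * mono k1 (coef v k1 l1) l1)).
have -> : \sum_(i1 < N) \sum_(j1 < N) \sum_(k1 < N) \sum_(l1 < N)
   coef (mono i1 (coef u i1 j1) j1 * mono k1 (coef v k1 l1) l1) a b =
   \sum_(i1 < N) \sum_(j1 < N) \sum_(k1 < N) \sum_(l1 < N)
   (if [&& (i1 : nat) == i, (j1 : nat) == j, (k1 : nat) == k, (l1 : nat) == l &
          (a == i + k) && (b == j + l)] then lead u v i j k l else 0).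
  apply: eq_bigr => i1 _; apply: eq_bigr => j1 _; apply: eq_bigr => k1 _.
  by apply: eq_bigr => l1 _; rewrite (prod_term _ _ _ _ Hu Hv C).
apply: sum4_single; apply: leq_trans HN2; lia.
Qed.

Lemma lead0 u v N i j k l : supp u N -> supp v N ->
  (N <= i)%N || (N <= j)%N || (N <= k)%N || (N <= l)%N -> lead u v i j k l = 0.
Proof.
move=> Hu Hv H; rewrite /lead.
case/orP: H => [/orP [/orP [H|H]|H]|H].
- by rewrite Hu ?H // sig0 mul0r scaler0.
- by rewrite Hu ?H ?orbT // sig0 mul0r scaler0.
- by rewrite (Hv k l) ?H // sig0 mulr0 scaler0.
- by rewrite (Hv k l) ?H ?orbT // sig0 mulr0 scaler0.
Qed.

Lemma prod_coef_ex u v N a b : supp u N -> supp v N ->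
  coef (u * v) a b = \sum_(i < a.+1) \sum_(j < b.+1) lead u v i j (a - i) (b - j).
Proof.
move=> Hu Hv.
have -> : u * v = nf N (coef u) * nf N (coef v) by rewrite -!nf_supp.
rewrite nf_mul (coef_sum4 N (fun i1 j1 k1 l1 => mono i1 (coef u i1 j1) j1 * mono k1 (coef v k1 l1) l1)).
rewrite -(@cauchy _ N (lead u v)); last by move=> i j k l H; exact: (lead0 Hu Hv H).
apply: eq_bigr => i1 _; apply: eq_bigr => j1 _; apply: eq_bigr => k1 _.
apply: eq_bigr => l1 _.
rewrite MPex coefZ coef_mono /delta /lead (eq_sym a) (eq_sym b).
by case: ifP => //; rewrite scaler0.
Qed.
End Rels.

Section Main.
Variables (F : fieldType) (q : F) (f g : {poly F}) (A : algType F) (x y h : A)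
  (B : algType F) (x' y' h' : B).
Hypothesis HAhx : h * x = x * peval f h.
Hypothesis HAyh : y * h = peval f h * y.
Hypothesis HAyx : y * x - q *: (x * y) = peval g h.
Hypothesis HAspan : forall a : A, exists N P, a = nf x y h N P.
Hypothesis HAuniq : forall N P, nf x y h N P = 0 ->
     forall i j, (i < N)%N -> (j < N)%N -> P i j = 0.
Hypothesis HBhx : h' * x' = x' * peval f h'.
Hypothesis HByh : y' * h' = peval f h' * y'.
Hypothesis HByx : y' * x' - q *: (x' * y') = peval 0 h'.
Hypothesis HBspan : forall a : B, exists N P, a = nf x' y' h' N P.
Hypothesis HBuniq : forall N P, nf x' y' h' N P = 0 ->
     forall i j, (i < N)%N -> (j < N)%N -> P i j = 0.

Local Notation cA := (coef HAspan).
Local Notation cB := (coef HBspan).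

Definition bound (G : nat -> nat -> A) N :=
  forall i j, (N <= i)%N \/ (N <= j)%N -> G i j = 0.

Definition bnd (G : nat -> nat -> A) : nat :=
  epsilon (inhabits 0%N) (bound G).

Definition lc (G : nat -> nat -> A) i j := cA (G i j) i j.

Definition phi (G : nat -> nat -> A) : B := nf x' y' h' (bnd G) (lc G).

Lemma bound_le G N M : bound G N -> (N <= M)%N -> bound G M.
Proof.
move=> H HNM i j [Hi|Hj]; apply: H; [left|right]; exact: leq_trans HNM _.
Qed.

Lemma lc_bound G N : bound G N -> forall i j, (N <= i)%N || (N <= j)%N -> lc G i j = 0.
Proof.
move=> H i j /orP Hij; rewrite /lc H.
  by rewrite (coef0 HAspan HAuniq).
by [].
Qed.

Lemma phi_bound G N : bound G N -> phi G = nf x' y' h' N (lc G).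
Proof.
move=> H; have H0 : bound G (bnd G) by apply: epsilon_spec; exists N.
rewrite /phi (@nf_bound _ _ x' y' h' (bnd G) (maxn (bnd G) N)) ?leq_maxl //;
  last exact: lc_bound.
rewrite (@nf_bound _ _ x' y' h' N (maxn (bnd G) N)) ?leq_maxr //.
exact: lc_bound.
Qed.

Lemma coef_phi G N : bound G N -> forall a b, cB (phi G) a b = lc G a b.
Proof.
move=> H a b; rewrite (phi_bound H) (coef_nf HBspan HBuniq) /trunc.
case: ifP => // /negbT; rewrite negb_and -!leqNgt => Hab.
by rewrite (lc_bound H).
Qed.

Lemma supp_phi G N : bound G N -> supp HBspan (phi G) N.
Proof. by move=> H i j Hij; rewrite (coef_phi H) (lc_bound H). Qed.


Lemma grmul_bound G G' N N' : bound G N -> bound G' N' -> bound (grmul G G') (N + N').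
Proof.
move=> H H' a b Hab; rewrite /grmul; apply: big1 => i _; apply: big1 => j _.
have Hi := ltn_ord i; have Hj := ltn_ord j.
case: (ltnP i N) => HiN; last by rewrite H ?mul0r //; left.
case: (ltnP j N) => HjN; last by rewrite H ?mul0r //; right.
by rewrite H' ?mulr0 //; lia.
Qed.

Lemma filt_grmul G G' : (forall i j, filt x y h i j (G i j)) ->
  (forall i j, filt x y h i j (G' i j)) ->
  forall a b, filt x y h a b (grmul G G' a b).
Proof.
move=> HG HG' a b; apply/(filtE HAspan HAuniq) => k l Hkl.
rewrite /grmul (coef_sum HAspan HAuniq); apply: big1 => i _.
rewrite (coef_sum HAspan HAuniq); apply: big1 => j _.
have Hi := ltn_ord i; have Hj := ltn_ord j.
have e1 : (i + (a - i))%N = a by lia.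
have e2 : (j + (b - j))%N = b by lia.
rewrite (prod_coef HAhx HAyh HAyx HAspan HAuniq (HG i j) (HG' (a - i)%N (b - j)%N)).
  case: ifP => //; move: Hkl; rewrite /lexlt; lia.
by move: Hkl; rewrite /lexlt; lia.
Qed.

Lemma phi_lc G G' : grfam x y h G -> grfam x y h G' ->
  (phi G = phi G' <-> forall a b, lc G a b = lc G' a b).
Proof.
move=> [[N HN] HG] [[N' HN'] HG'].
have HK : bound G (maxn N N') by apply: (bound_le HN); rewrite leq_maxl.
have HK' : bound G' (maxn N N') by apply: (bound_le HN'); rewrite leq_maxr.
split.
  by move=> E a b; rewrite -(coef_phi HK) -(coef_phi HK') E.
move=> E; apply: (coef_inj (Hspan := HBspan)) => a b.
by rewrite (coef_phi HK) (coef_phi HK') E.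
Qed.

Lemma item2 G G' : grfam x y h G -> grfam x y h G' ->
  (phi G = phi G' <-> grequiv x y h G G').
Proof.
move=> HG HG'; rewrite (phi_lc HG HG').
case: HG => _ HG; case: HG' => _ HG'.
split.
  move=> Hl i j; apply/(filtmE HAspan HAuniq) => k l Hkl.
  rewrite (coefB HAspan HAuniq).
  case: (boolP ((k == i) && (l == j))) => [/andP [/eqP -> /eqP ->]|Hne].
    by move: (Hl i j); rewrite /lc => ->; rewrite subrr.
  have Hlt : lexlt i j k l by move: Hkl Hne; rewrite /lexlt; lia.
  rewrite ((filtE HAspan HAuniq _ _ _).1 (HG i j) k l Hlt).
  by rewrite ((filtE HAspan HAuniq _ _ _).1 (HG' i j) k l Hlt) subrr.
move=> Hq a b; have := (filtmE HAspan HAuniq a b _).1 (Hq a b) a b.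
rewrite (coefB HAspan HAuniq) /lc => H; apply/eqP; rewrite -subr_eq0; apply/eqP.
by apply: H; rewrite /lexlt ltnn eqxx ltnn.
Qed.

Lemma item3 (b : B) : exists2 G, grfam x y h G & phi G = b.
Proof.
have [N HN] := exists_supp HBspan b.
exists (fun i j => mono x y h i (cB b i j) j).
  split.
    exists N => i j Hij; rewrite HN ?mono0 //.
    by case: Hij => ->; rewrite ?orbT.
  move=> i j; apply/(filtE HAspan HAuniq) => k l Hkl.
  by rewrite (coef_mono HAspan HAuniq) /delta (arith2 Hkl).
have Hb : bound (fun i j => mono x y h i (cB b i j) j) N.
  move=> i j Hij; rewrite HN ?mono0 //.
  by case: Hij => ->; rewrite ?orbT.
rewrite (phi_bound Hb) {2}(nf_supp HN); apply: nf_ext => i j _ _.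
by rewrite /lc (coef_mono HAspan HAuniq) /delta !eqxx.
Qed.

Lemma item4 G G' : grfam x y h G -> grfam x y h G' ->
  phi (gradd G G') = phi G + phi G'.
Proof.
move=> [[N HN] _] [[N' HN'] _].
have HK : bound G (maxn N N') by apply: (bound_le HN); rewrite leq_maxl.
have HK' : bound G' (maxn N N') by apply: (bound_le HN'); rewrite leq_maxr.
have HKs : bound (gradd G G') (maxn N N').
  by move=> i j Hij; rewrite /gradd HK // HK' // addr0.
rewrite (phi_bound HKs) (phi_bound HK) (phi_bound HK') -nfD.
by apply: nf_ext => i j _ _; rewrite /lc /gradd (coefD HAspan HAuniq).
Qed.

Lemma item5 c G : grfam x y h G -> phi (grscale c G) = c *: phi G.
Proof.
move=> [[N HN] _].
have HKs : bound (grscale c G) N by move=> i j Hij; rewrite /grscale HN // scaler0.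
rewrite (phi_bound HKs) (phi_bound HN) -nfZ.
by apply: nf_ext => i j _ _; rewrite /lc /grscale (coefZ HAspan HAuniq).
Qed.

Lemma HBg0 : peval 0 h' = 0.
Proof. exact: peval0. Qed.

Lemma item6 G G' : grfam x y h G -> grfam x y h G' ->
  phi (grmul G G') = phi G * phi G'.
Proof.
move=> [[N HN] HG] [[N' HN'] HG'].
set K := maxn N N'.
have HK : bound G K by apply: (bound_le HN); rewrite leq_maxl.
have HK' : bound G' K by apply: (bound_le HN'); rewrite leq_maxr.
have HKm : bound (grmul G G') (K + K) := grmul_bound HK HK'.
apply: (coef_inj (Hspan := HBspan)) => a b.
rewrite (coef_phi HKm) (prod_coef_ex HBhx HByh HByx HBg0 HBuniq a b (supp_phi HK) (supp_phi HK')).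
rewrite /lc /grmul (coef_sum HAspan HAuniq); apply: eq_bigr => i _.
rewrite (coef_sum HAspan HAuniq); apply: eq_bigr => j _.
have Hi := ltn_ord i; have Hj := ltn_ord j.
have e1 : (i + (a - i))%N = a by lia.
have e2 : (j + (b - j))%N = b by lia.
have C : lexlt (i + (a - i)) (j + (b - j)) a b || ((a == i + (a - i))%N && (b == j + (b - j))%N).
  by apply/orP; right; apply/andP; split; apply/eqP; lia.
rewrite (prod_coef HAhx HAyh HAyx HAspan HAuniq (HG i j) (HG' (a - i)%N (b - j)%N) C).
rewrite ifT; last by apply/andP; split; apply/eqP; lia.
by rewrite /lead (coef_phi HK) (coef_phi HK').
Qed.

Lemma phi_single i0 j0 p :
  phi (grsingle i0 j0 (mono x y h i0 p j0)) = mono x' y' h' i0 p j0.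
Proof.
have Hb : bound (grsingle i0 j0 (mono x y h i0 p j0)) (maxn i0 j0).+1.
  move=> i j Hij; rewrite /grsingle; case: ifP => // /andP [/eqP Ei /eqP Ej].
  by move: Hij; rewrite Ei Ej; lia.
rewrite (phi_bound Hb) -(@nf_delta _ _ x' y' h' (maxn i0 j0).+1 i0 j0 p); try lia.
apply: nf_ext => i j _ _; rewrite /lc /grsingle /delta.
case: ifP => [/andP [/eqP -> /eqP ->]|_]; first by rewrite (coef_mono HAspan HAuniq) /delta !eqxx.
exact: (coef0 HAspan HAuniq).
Qed.

Lemma monoI1 (C : algType F) (a b c : C) : mono a b c 0 1 0 = 1.
Proof. by rewrite /mono !expr0 peval1 !mulr1. Qed.
Lemma monoIx (C : algType F) (a b c : C) : mono a b c 1 1 0 = a.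
Proof. by rewrite /mono expr1 expr0 peval1 !mulr1. Qed.
Lemma monoIy (C : algType F) (a b c : C) : mono a b c 0 1 1 = b.
Proof. by rewrite /mono expr1 expr0 peval1 !mul1r. Qed.
Lemma monoIh (C : algType F) (a b c : C) : mono a b c 0 'X 0 = c.
Proof. by rewrite /mono !expr0 pevalX mulr1 mul1r. Qed.

Lemma gr_iso_phi : gr_iso x y h x' y' h' phi.
Proof.
split.
  move=> G G' [[N HN] HG] [[N' HN'] HG']; split.
    by exists (N + N')%N; apply: grmul_bound.
  exact: filt_grmul.
split; first exact: item2.
split; first exact: item3.
split; first exact: item4.
split; first by move=> c G HG; exact: item5.
split; first exact: item6.
split; first by rewrite -{1}(monoI1 x y h) phi_single monoI1.
split; first by rewrite -{1}(monoIx x y h) phi_single monoIx.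
split; first by rewrite -{1}(monoIy x y h) phi_single monoIy.
by rewrite -{1}(monoIh x y h) phi_single monoIh.
Qed.
End Main.

Theorem mainTheorem3 (F : fieldType) (q : F) (f g : {poly F})
  (A : algType F) (x y h : A) (B : algType F) (x' y' h' : B) :
  is_Hq q f g x y h -> is_Hq q f 0 x' y' h' ->
  exists phi : (nat -> nat -> A) -> B, gr_iso x y h x' y' h' phi.
Proof.
move=> [[HAhx HAyh HAyx] [HAspan HAuniq]] [[HBhx HByh HByx] [HBspan HBuniq]].
eexists; apply: gr_iso_phi; eassumption.
Qed.
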